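(* Let $l\ge3$ be an odd integer and let $(A,M)$ be any NIM-rep of the fusion ring $\mathrm{Gr}((A_1,l)_{\frac12})$. Then $(V_{l-1}\vartriangleright m_p,m_q)\le1$ for all $m_p,m_q\in M$.
   Context: For odd $l\ge3$, $\mathrm{Gr}((A_1,l)_{\frac12})$ is the commutative fusion ring with basis $\{V_0,V_2,V_4,\dots,V_{l-1}\}$ (unit $V_0$, every basis element self-dual) and multiplication $V_iV_j=\sum_k V_k$, the sum over all $k$ with $|i-j|\le k\le\min(i+j,2l-i-j)$ and $k\equiv i+j \pmod 2$. A NIM-rep of a fusion ring $(R,B)$ is a nonzero left $R$-module $A$, free over $\mathbb{Z}$ with a fixed basis $M$, such that each $b\vartriangleright m$ is a non-negative integer combination of elements of $M$ and $(b\vartriangleright m,m')=(m,b^*\vartriangleright m')$ for the symmetric bilinear form $(-,-)$ making $M$ orthonormal. *)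

(* Defs.v *)
From mathcomp Require Import all_boot.
Set Implicit Arguments. Unset Strict Implicit. Unset Printing Implicit Defensive.

(* Basis of Gr((A_1,l)_{1/2}) for odd l: V_0, V_2, ..., V_{l-1}.
   The basis element indexed by a : 'I_(l./2).+1 is V_(2a) (label a.*2). *)
Definition A1half_basis (l : nat) := 'I_(l./2).+1.
Definition label (l : nat) (a : A1half_basis l) : nat := (nat_of_ord a).*2.

(* Fusion coefficient of V_k in V_i V_j (labels i j k):
   1 if |i-j| <= k <= min(i+j, 2l-i-j) and k = i+j mod 2, else 0. *)
Definition fus_coef (l i j k : nat) : nat :=
  [&& odd k == odd (i + j), (i - j) + (j - i) <= k & k <= minn (i + j) (l.*2 - (i + j))].

(* A based module with basis M: the action of a basis element b on a basis
   element m is the non-negative integer combination encoded as a multiset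
   (a list with multiplicities) of elements of M. The linear extension to the
   free Z-module Z^(M) gives the R-module A. *)
Definition coef (l : nat) (M : eqType) (act : A1half_basis l -> M -> seq M)
  (b : A1half_basis l) (m m' : M) : nat := count_mem m' (act b m).

(* NIM-rep of Gr((A_1,l)_{1/2}) (all basis elements are self-dual). *)
Record is_NIMrep (l : nat) (M : eqType) (act : A1half_basis l -> M -> seq M) : Prop := {
  nim_nonzero : inhabited M;
  nim_unit : forall m : M, perm_eq (act ord0 m) [:: m];
  (* (V_i V_j) |> m = V_i |> (V_j |> m) *)
  nim_assoc : forall (a b : A1half_basis l) (m : M),
    perm_eq
      (flatten [seq flatten (nseq (fus_coef l (label a) (label b) (label c)) (act c m))
               | c <- enum 'I_(l./2).+1])
      (flatten [seq act a m' | m' <- act b m]);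
  (* (b |> m, m') = (m, b^* |> m') with b^* = b *)
  nim_adj : forall (b : A1half_basis l) (m m' : M),
    coef act b m m' = coef act b m' m
}.

(* Main.v *)
Require Import Defs.
From mathcomp Require Import all_boot all_order all_algebra zify ring.
Import Order.TTheory GRing.Theory Num.Theory.

Lemma fus1 (n j c : nat) : (n = j.*2 \/ n = j.*2.+1) -> 1 <= n -> c <= n ->
  fus_coef (n.*2.+1) (j.+1).*2 (j.+1).*2 c.*2 + fus_coef (n.*2.+1) j.*2 j.*2 c.*2 + (c == n)
  = fus_coef (n.*2.+1) (j.+1).*2 j.*2 c.*2 + fus_coef (n.*2.+1) j.*2 (j.+1).*2 c.*2 + 2 * (c == 0).
Proof.
move=> hj hn hc; rewrite /fus_coef -!doubleD !odd_double eqxx /= !leq_min.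
do !(case: leqP => ? /=); case: eqP => ?; case: eqP => ?; lia.
Qed.

Lemma fus2 (n j c : nat) : (n = j.*2 \/ n = j.*2.+1) -> 1 <= n -> c <= n ->
  fus_coef (n.*2.+1) (j.+1).*2 (n - j).*2 c.*2 + (~~ odd n) * (c == 0)
  = fus_coef (n.*2.+1) j.*2 (n - j).*2 c.*2 + (odd n) * (c == 0).
Proof.
move=> hj hn hc; rewrite /fus_coef -!doubleD !odd_double eqxx /= !leq_min.
case: hj => ->; rewrite ?odd_double /= ?oddS ?odd_double /=;
do !(case: leqP => ? /=); case: eqP => ?; lia.
Qed.

Lemma sum_count (T : eqType) (s U : seq T) (F : T -> nat) :
  uniq U -> {subset s <= U} ->
  \sum_(x <- s) F x = \sum_(x <- U) count_mem x s * F x.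
Proof.
elim: s => [|y s IH] hU hs.
  by rewrite big_nil big1 // => x _.
rewrite big_cons IH //; last by move=> z hz; apply: hs; rewrite inE hz orbT.
rewrite [RHS](eq_bigr (fun x => (y == x) * F x + count_mem x s * F x)); last by move=> x _; rewrite /= mulnDl.
rewrite big_split /= [X in _ = X + _](bigD1_seq y) ?hs ?mem_head //= ?eqxx ?mul1n.
rewrite [X in _ = _ + X + _]big1 ?addn0 // => x hx.
by rewrite eq_sym (negbTE hx).
Qed.

Lemma sumZ (T : Type) (U : seq T) (F : T -> nat) :
  (\sum_(r <- U) Posz (F r))%R = Posz (\sum_(r <- U) F r).
Proof. by elim: U => [|x U IH]; rewrite ?big_nil // !big_cons IH. Qed.

Lemma prodL l (M : eqType) (act : A1half_basis l -> M -> seq M) (hnim : is_NIMrep act)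
  (a b : A1half_basis l) (m r : M) (U : seq M) :
  uniq U -> {subset act b m <= U} ->
  \sum_(x <- U) coef act b m x * coef act a x r =
  \sum_(c < (l./2).+1) fus_coef l (label a) (label b) (label c) * coef act c m r.
Proof.
move=> hU hs.
have := nim_assoc hnim a b m => /permP /(_ (pred1 r)).
rewrite !count_flatten -!map_comp !sumnE !big_map => e.
rewrite /coef -(@sum_count _ (act b m) U (fun x => count_mem r (act a x)) hU hs) -e.
apply: eq_bigr => c _ /=.
by rewrite count_flatten map_nseq sumn_nseq mulnC.
Qed.

Lemma pick0 (K k : nat) (i0 : 'I_K) (F : 'I_K -> nat) :
  \sum_(c < K) (k * (c == i0)) * F c = k * F i0.
Proof.
rewrite (bigD1 i0) //= eqxx muln1 big1 ?addn0 // => c hc.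
by rewrite (negbTE hc) muln0.
Qed.

Lemma coef0 l (M : eqType) (act : A1half_basis l -> M -> seq M) (hnim : is_NIMrep act)
  (x y : M) : coef act ord0 x y = (x == y).
Proof.
rewrite /coef; have := nim_unit hnim x => /permP ->.
by rewrite /= addn0.
Qed.

Lemma sq0 (T : eqType) (U : seq T) (f : T -> int) :
  (\sum_(r <- U) f r * f r <= 0)%R -> forall r, r \in U -> f r = 0%R.
Proof.
elim: U => [|y U IH] //= h r.
rewrite big_cons in h.
have h1 : (0 <= f y * f y)%R by rewrite -expr2 sqr_ge0.
have h2 : (0 <= \sum_(r <- U) f r * f r)%R.
  by apply: sumr_ge0 => i _; rewrite -expr2 sqr_ge0.
have e1 : (f y * f y = 0)%R.
  by apply/eqP; rewrite eq_le h1 andbT; apply: le_trans h; rewrite lerDl.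
rewrite inE => /orP [/eqP -> | hr].
  by move/eqP: e1; rewrite mulf_eq0 orbb => /eqP.
apply: IH => //; apply: le_trans h; rewrite e1 add0r.
by [].
Qed.

Arguments prodL {l M act} hnim a b m r {U}.
Arguments coef0 {l M act}.
Arguments pick0 {K}.
Arguments fus1 {n j c}.
Arguments fus2 {n j c}.
Arguments sq0 {T U f}.

Theorem proposition3p32 (l : nat) (hl3 : 3 <= l) (hlodd : odd l)
  (M : eqType) (act : A1half_basis l -> M -> seq M)
  (hnim : is_NIMrep act) :
  forall p q : M, coef act (@ord_max (l./2)) p q <= 1.
Proof.
move=> p q; rewrite leqNgt; apply/negP => hXpq.
pose n := l./2.
have hl : l = n.*2.+1 by move: (odd_double_half l); rewrite hlodd -/n; lia.
have hn1 : 1 <= n by lia.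
pose j := n./2.
have hj : n = j.*2 \/ n = j.*2.+1.
  by move: (odd_double_half n); rewrite -/j; case: (odd n) => /= h; [right|left]; lia.
have hA : j.+1 < n.+1 by lia.
have hB : j < n.+1 by lia.
have hZ : n - j < n.+1 by lia.
pose oA : A1half_basis l := Ordinal hA.
pose oB : A1half_basis l := Ordinal hB.
pose oZ : A1half_basis l := Ordinal hZ.
pose X : A1half_basis l := @ord_max n.
rewrite -/X in hXpq.
pose U := undup (act oA p ++ act oB p ++ act oA q ++ act oB q ++ act oZ p).
have hU : uniq U := undup_uniq _.
have sub : forall b x, b \in [:: oA; oB] -> x \in [:: p; q] -> {subset act b x <= U}.
  move=> b x; rewrite !inE => /orP [] /eqP -> /orP [] /eqP -> y hy;
  by rewrite mem_undup !mem_cat hy ?orbT.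
have subZ : {subset act oZ p <= U}.
  by move=> y hy; rewrite mem_undup !mem_cat hy ?orbT.
have G : forall x y, x \in [:: p; q] ->
  (\sum_(r <- U) (Posz (coef act oA x r) - Posz (coef act oB x r)) *
     (Posz (coef act oA r y) - Posz (coef act oB r y)))%R
  = (Posz (2 * (x == y)) - Posz (coef act X x y))%R.
  move=> x y hx.
  have sA := sub oA x (mem_head _ _) hx.
  have sB : {subset act oB x <= U} by apply: sub hx; rewrite !inE eqxx orbT.
  have e1 : \sum_(r <- U) (coef act oA x r * coef act oA r y + coef act oB x r * coef act oB r y)
             + coef act X x y
          = \sum_(r <- U) (coef act oA x r * coef act oB r y + coef act oB x r * coef act oA r y)
             + 2 * (x == y).
    rewrite !big_split /= (prodL hnim oA oA x y hU sA) (prodL hnim oB oB x y hU sB).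
    rewrite (prodL hnim oB oA x y hU sA) (prodL hnim oA oB x y hU sB).
    rewrite -[coef act X x y]mul1n -(pick0 1 X (fun c => coef act c x y)).
    rewrite -(coef0 hnim) -(pick0 2 ord0 (fun c => coef act c x y)).
    rewrite -!big_split; apply: eq_bigr => c _ /=; rewrite -!mulnDl; congr (_ * _).
    have := fus1 hj hn1 (leq_ord c); rewrite -hl /label /=.
    have -> : (c == X) = (nat_of_ord c == n) by [].
    have -> : (c == ord0) = (nat_of_ord c == 0) by [].
    lia.
  rewrite (eq_bigr (fun r => Posz (coef act oA x r * coef act oA r y + coef act oB x r * coef act oB r y)
     - Posz (coef act oA x r * coef act oB r y + coef act oB x r * coef act oA r y))%R); last first.
    by move=> r _; rewrite !PoszD !PoszM; ring.
  rewrite sumrB !sumZ; lia.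
have symm : forall b x y, coef act b x y = coef act b y x := nim_adj hnim.
pose Yf x r := (Posz (coef act oA x r) - Posz (coef act oB x r))%R.
have hS : (\sum_(r <- U) (Yf p r + Yf q r) * (Yf p r + Yf q r) <= 0)%R.
  rewrite (eq_bigr (fun r => Yf p r * Yf r p + Yf p r * Yf r q
                     + (Yf q r * Yf r p + Yf q r * Yf r q))%R); last first.
    by move=> r _; rewrite /Yf (symm oA r p) (symm oB r p) (symm oA r q) (symm oB r q); ring.
  rewrite !big_split /= !G ?inE ?eqxx ?orbT //.
  rewrite (symm X q p) (eq_sym q p).
  case: (eqVneq p q) => [epq|npq].
    by subst q; rewrite ?eqxx; lia.
  by rewrite ?(negbTE npq); lia.
have z := sq0 hS.
have T0 : (\sum_(r <- U) Posz (coef act oZ p r) * (Yf p r + Yf q r) = 0)%R.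
  by rewrite big1_seq // => r /andP [_ hr]; rewrite z // mulr0.
rewrite (eq_bigr (fun r => Posz (coef act oZ p r * coef act oA r p)
     - Posz (coef act oZ p r * coef act oB r p)
     + (Posz (coef act oZ p r * coef act oA r q) - Posz (coef act oZ p r * coef act oB r q)))%R)
  in T0; last first.
  by move=> r _; rewrite /Yf (symm oA p r) (symm oB p r) (symm oA q r) (symm oB q r) !PoszM; ring.
rewrite big_split /= !sumrB !sumZ in T0.
have e2 : forall s, \sum_(r <- U) coef act oZ p r * coef act oA r s + (~~ odd n) * (p == s)
                  = \sum_(r <- U) coef act oZ p r * coef act oB r s + (odd n) * (p == s).
  move=> s; rewrite (prodL hnim oA oZ p s hU subZ) (prodL hnim oB oZ p s hU subZ).
  rewrite -(coef0 hnim p s) -(pick0 (~~ odd n) ord0 (fun c => coef act c p s)).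
  rewrite -(pick0 (odd n) ord0 (fun c => coef act c p s)).
  rewrite -!big_split; apply: eq_bigr => c _ /=; rewrite -!mulnDl; congr (_ * _).
  have := fus2 hj hn1 (leq_ord c); rewrite -hl /label /=.
  have -> : (c == ord0) = (nat_of_ord c == 0) by [].
  lia.
have := e2 p; have := e2 q; rewrite eqxx.
case: (odd n) => /=; case: (p == q) => /=; lia.
Qed.
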